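(* Let $n\ge 3$ and $V=\{d\in\{0,1\}^n: d_n=0\}$. For $\epsilon\in\{\text{even},\text{odd}\}$ let $V_\epsilon\subseteq V$ be the words whose number of digits $1$ has parity $\epsilon$, and let $\Gamma_\epsilon$ be the directed graph on $V_\epsilon$ whose arrows are: (i) every arrow of $L_n$ between two elements of $V_\epsilon$, and (ii) the additional arrows $d_1\dots d_{n-3}\,000\to d_1\dots d_{n-3}\,110$ whenever both ends lie in $V_\epsilon$. Then $V=V_{\text{even}}\sqcup V_{\text{odd}}$, every arrow of $L_n$ between elements of $V$ joins words of the same parity, and for each $\epsilon$ the map $d_1\dots d_{n-2}d_{n-1}0\mapsto d_1\dots d_{n-2}$ is an isomorphism of directed graphs $\Gamma_\epsilon\to L_{n-2}$.
   Context: For $m\ge 1$, $L_m$ is the directed graph on $\{0,1\}^m$ with arrows $u\,01\,v\to u\,10\,v$ (binary words $u,v$, $|u|+|v|=m-2$) and $u0\to u1$ ($|u|=m-1$); it is isomorphic (via Lascoux–Schützenberger notation) to the regular Hasse diagram of the Lagrangian Grassmannian of rank $m$. $V$ corresponds to the singular Hasse diagram $W^{\mathfrak{p},\{\alpha_n\}}$, and the arrows (ii) correspond to non-standard invariant differential operators constructed via the Penrose transform. *)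

(* Defs.v *)
(* Binary words are [seq bool] (false = digit 0, true = digit 1). *)
From mathcomp Require Import all_boot.
Set Implicit Arguments. Unset Strict Implicit. Unset Printing Implicit Defensive.

Definition Lvert (m : nat) (w : seq bool) : Prop := size w = m.

Definition Larrow (m : nat) (x y : seq bool) : Prop :=
  size x = m /\
  ((exists u v : seq bool, x = u ++ [:: false; true] ++ v /\ y = u ++ [:: true; false] ++ v)
   \/ (exists u : seq bool, x = rcons u false /\ y = rcons u true)).

Definition Vset (n : nat) (d : seq bool) : Prop := size d = n /\ last true d = false.

(* V_eps: parity of the number of 1's; eps = false = even, eps = true = odd. *)
Definition Veps (n : nat) (eps : bool) (d : seq bool) : Prop :=
  Vset n d /\ odd (count id d) = eps.

Definition extra_arrow (n : nat) (x y : seq bool) : Prop :=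
  exists w : seq bool, size w = n - 3 /\
    x = w ++ [:: false; false; false] /\ y = w ++ [:: true; true; false].

Definition Gamma_arrow (n : nat) (eps : bool) (x y : seq bool) : Prop :=
  Veps n eps x /\ Veps n eps y /\ (Larrow n x y \/ extra_arrow n x y).

Definition trunc2 (n : nat) (d : seq bool) : seq bool := take (n - 2) d.

(* Main.v *)
Require Import Defs.
From mathcomp Require Import all_boot.

Lemma cat2_inj (s1 s2 t1 t2 : seq bool) :
  size t1 = size t2 -> s1 ++ t1 = s2 ++ t2 -> s1 = s2 /\ t1 = t2.
Proof.
move=> ht h.
have hs : size s1 = size s2.
  by have := congr1 size h; rewrite !size_cat ht => /eqP; rewrite eqn_add2r => /eqP.
by move/eqP: h; rewrite eqseq_cat // => /andP [/eqP -> /eqP ->].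
Qed.

Lemma Vdec n d : 2 <= n -> Vset n d ->
  exists w a, size w = n - 2 /\ d = w ++ [:: a; false].
Proof.
move=> hn [hs hl].
case/lastP: d hs hl => [|d' x]; first by move=> <-.
rewrite last_rcons => hs ->.
case/lastP: d' hs => [|w a]; first by move=> h; rewrite -h in hn.
rewrite !size_rcons => hs; exists w, a; split; first by rewrite -hs subn2.
by rewrite -!cats1 -catA.
Qed.

Lemma cat2 (s1 s2 : seq bool) x1 y1 x2 y2 :
  s1 ++ [:: x1; y1] = s2 ++ [:: x2; y2] -> s1 = s2 /\ x1 = x2 /\ y1 = y2.
Proof. move=> h; have [-> e] := cat2_inj s1 s2 [:: x1; y1] [:: x2; y2] erefl h; by case: e => -> ->. Qed.
Arguments cat2 {s1 s2 x1 y1 x2 y2}.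
Arguments Vdec {n d}.

Lemma cnt w a : odd (count id (w ++ [:: a; false])) = odd (count id w) (+) a.
Proof. by rewrite count_cat /= !addn0 oddD; case: a. Qed.

Lemma tr n w a : size w = n - 2 -> trunc2 n (w ++ [:: a; false]) = w.
Proof. by move=> h; rewrite /trunc2 -h take_size_cat. Qed.

Lemma mkV n eps w a : 2 <= n -> size w = n - 2 -> odd (count id w) (+) a = eps ->
  Veps n eps (w ++ [:: a; false]).
Proof.
move=> hn hw hp; split; last by rewrite cnt.
by split; [rewrite size_cat hw subnK | rewrite last_cat].
Qed.

Theorem mainTheorem13 (n : nat) (hn : 3 <= n) :
  (* V = V_even ⊔ V_odd *)
  (forall d, Vset n d <-> (Veps n false d \/ Veps n true d)) /\
  (forall d, ~ (Veps n false d /\ Veps n true d)) /\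
  (* arrows of L_n inside V preserve parity *)
  (forall d e, Vset n d -> Vset n e -> Larrow n d e ->
     odd (count id d) = odd (count id e)) /\
  (* trunc2 is an isomorphism of directed graphs Gamma_eps -> L_{n-2} *)
  (forall eps : bool,
     (forall d, Veps n eps d -> Lvert (n - 2) (trunc2 n d)) /\
     (forall d e, Veps n eps d -> Veps n eps e -> trunc2 n d = trunc2 n e -> d = e) /\
     (forall w, Lvert (n - 2) w -> exists2 d, Veps n eps d & trunc2 n d = w) /\
     (forall d e, Veps n eps d -> Veps n eps e ->
        (Gamma_arrow n eps d e <-> Larrow (n - 2) (trunc2 n d) (trunc2 n e)))).
Proof.
have hn2 : 2 <= n by apply: ltnW.
split.
  move=> d; split; last by case=> [[]|[]].
  move=> hV; destruct (odd (count id d)) eqn:hb; [right|left]; by split.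
split; first by move=> d [[_ h1] [_ h2]]; rewrite h1 in h2.
split.
  move=> d e _ [hs hl] [_ [[u [v [-> ->]]]|[u [_ he]]]].
    by rewrite !count_cat.
  by rewrite he last_rcons in hl.
move=> eps; split.
  move=> d [hV _]; have [w [a [hw ->]]] := Vdec hn2 hV.
  by rewrite /Lvert tr.
split.
  move=> d e [hV hp] [hV' hp'].
  have [w [a [hw ed]]] := Vdec hn2 hV; have [w' [a' [hw' ee]]] := Vdec hn2 hV'.
  subst d e; rewrite !tr // => ew; subst w'.
  move: hp hp'; rewrite !cnt => <-.
  by clear hV hV'; case: a; case: a'; case: (odd _).
split.
  move=> w hw; exists (w ++ [:: odd (count id w) (+) eps; false]); last by rewrite tr.
  split; first by split; [rewrite size_cat hw subnK|rewrite last_cat].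
  by rewrite cnt; case: eps; case: (odd _).
move=> d e [hV hp] [hV' hp'].
have [w [a [hw ed]]] := Vdec hn2 hV; have [w' [a' [hw' ee]]] := Vdec hn2 hV'.
rewrite ed ee !tr //.
have hsd : size d = n by case: hV.
subst d e; clear hV hV' hsd.
move: hp hp'; rewrite !cnt => hp hp'.
split.
- move=> [_ [_ [[_ [[u [v [hd he]]]|[u [_ he]]]] | [x [hx [hd he]]]]]].
  + split=> //.
    case/lastP: v hd he => [|v y].
      by rewrite cats0 => /esym /cat2 [_ [_ ]].
    case/lastP: v => [|v x] hd he.
      have hd' : rcons u false ++ [:: true; y] = w ++ [:: a; false]
        by rewrite hd -cats1 -catA.
      have he' : rcons u true ++ [:: false; y] = w' ++ [:: a'; false]
        by rewrite he -cats1 -catA.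
      case: (cat2 hd') => <- _; case: (cat2 he') => <- _.
      by right; exists u.
    have hd' : (u ++ [:: false, true & v]) ++ [:: x; y] = w ++ [:: a; false]
      by rewrite hd -!cats1 -!catA.
    have he' : (u ++ [:: true, false & v]) ++ [:: x; y] = w' ++ [:: a'; false]
      by rewrite he -!cats1 -!catA.
    case: (cat2 hd') => <- _; case: (cat2 he') => <- _.
    by left; exists u, v.
  + move: he; case/lastP: u => [|u z] he.
      by move/(congr1 size)/eqP: he; rewrite size_cat addn2.
    by move: he; rewrite -!cats1 -catA => /cat2 [_ [_ ]].
  + have hd' : rcons x false ++ [:: false; false] = w ++ [:: a; false]
      by rewrite hd -cats1 -catA.
    have he' : rcons x true ++ [:: true; false] = w' ++ [:: a'; false]
      by rewrite he -cats1 -catA.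
    case: (cat2 hd') => <- _; case: (cat2 he') => <- _.
    split; first by rewrite size_rcons hx -subSn.
    by right; exists x.
- move=> [_ [[u [v [hw1 hw2]]]|[u [hw1 hw2]]]].
  + have ha : a = a'.
      move: hp'; rewrite -hp hw1 hw2 !count_cat /=; clear hp.
      by case: a; case: a'; case: (odd _).
    subst a' w w'; split; first exact: mkV hn2 hw hp.
    split; first exact: mkV hn2 hw' hp'.
    left; split; first by rewrite size_cat hw subnK.
    by left; exists u, (v ++ [:: a; false]); rewrite -!catA.
  + subst w w'.
    have ha : a' = ~~ a.
      have h := hp'; rewrite -hp -!cats1 !count_cat /= in h; clear hp hp'; move: h.
      rewrite !addn0 addn1 /=.
      by case: a; case: a'; case: (odd _).
    subst a'.
    split; first exact: mkV hn2 hw hp.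
    split; first exact: mkV hn2 hw' hp'.
    case: a hp hp' => _ _.
    * left; split; first by rewrite size_cat hw subnK.
      by left; exists u, [:: false]; rewrite -!cats1 -!catA.
    * right; exists u; split; last by split; rewrite -!cats1 -!catA.
      by move: hw; rewrite size_rcons => /(congr1 predn) /= ->; rewrite -subn1 -subnDA.
Qed.
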